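(* Let $h_0\in(0,2\pi)$, $\alpha>0$ and $T>0$ be constants. Let $k\colon[0,2\pi]\to(0,+\infty)$ be a twice continuously differentiable positive function with $k(0)=k(2\pi)$, $k'(0)=k'(2\pi)$, and let $\varphi\colon[-h_0,2\pi]\to[0,+\infty)$ be a twice continuously differentiable nonnegative function with $\int_0^{2\pi}\varphi(x)\,\mathrm{d}x=1$ and $\varphi(x)=\varphi(x+2\pi)$ for all $x\in[-h_0,0]$. Suppose that for every $h\in(0,h_0]$ there exists a solution $u_h\in\mathbf C^{2,1}([0,2\pi]\times[0,T])$ of the problem $$\frac{\partial u(x,t)}{\partial t}=u(x,t)\bigl(k(x)\,u(x-h,t)-f[u(\cdot,t)]\bigr)+\alpha\frac{\partial^2u(x,t)}{\partial x^2},\quad 0\le x\le 2\pi,\ 0\le t\le T,$$ $$u(x,0)=\varphi(x),\qquad u(0,t)=u(2\pi,t),\qquad \frac{\partial u}{\partial x}(0,t)=\frac{\partial u}{\partial x}(2\pi,t),$$ where $u(x-h,t):=u(x-h+2\pi,t)$ whenever $x-h<0$ and $f[u(\cdot,t)]=\int_0^{2\pi}k(x)\,u(x,t)\,u(x-h,t)\,\mathrm{d}x$. Assume moreover that $$\sup_{0<h\le h_0}\|u_h\|_{\mathbf C^{2,1}([0,2\pi]\times[0,T])}<\infty.$$ Then there exists $h^*\in(0,h_0]$ such that $u_h$ is a nonnegative function on $[0,2\pi]\times[0,T]$ for every $h\in(0,h^*]$.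
   Context: $\mathbf C^{2,1}([0,2\pi]\times[0,T])$ denotes the Banach space of continuous functions $w(x,t)$ on $[0,2\pi]\times[0,T]$ such that $\partial w/\partial x$, $\partial^2 w/\partial x^2$, $\partial w/\partial t$ are continuous on $[0,2\pi]\times[0,T]$ (continuity up to the boundary meaning the limits from the interior exist and are taken as boundary values), with norm $$\|w\|_{\mathbf C^{2,1}}=\max_{0\le x\le2\pi,\,0\le t\le T}\Bigl\{|w|+\Bigl|\tfrac{\partial w}{\partial x}\Bigr|+\Bigl|\tfrac{\partial^2 w}{\partial x^2}\Bigr|+\Bigl|\tfrac{\partial w}{\partial t}\Bigr|\Bigr\}.$$ *)

(* Defs.v *)
From Stdlib Require Import Reals Lra.
From Coquelicot Require Import Coquelicot.
Open Scope R_scope.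

Definition cont_on_interval (f : R -> R) (a b : R) : Prop :=
  forall x, a <= x <= b -> forall eps, 0 < eps -> exists delta, 0 < delta /\
    forall y, a <= y <= b -> Rabs (y - x) < delta -> Rabs (f y - f x) < eps.

(* f is C^2 on [a,b]: f1, f2 are continuous on [a,b] and are the first and
   second derivatives of f on (a,b) (continuity up to the boundary: the
   boundary values of the derivatives are the limits from the interior). *)
Definition C2_on (f f1 f2 : R -> R) (a b : R) : Prop :=
  cont_on_interval f a b /\ cont_on_interval f1 a b /\ cont_on_interval f2 a b /\
  (forall x, a < x < b -> is_derive f x (f1 x)) /\
  (forall x, a < x < b -> is_derive f1 x (f2 x)).

Definition cont_on_rect (w : R -> R -> R) (T : R) : Prop :=
  forall x t, 0 <= x <= 2 * PI -> 0 <= t <= T ->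
  forall eps, 0 < eps -> exists delta, 0 < delta /\
    forall y s, 0 <= y <= 2 * PI -> 0 <= s <= T ->
      Rabs (y - x) < delta -> Rabs (s - t) < delta ->
      Rabs (w y s - w x t) < eps.

(* w belongs to C^{2,1}([0,2pi] x [0,T]), with wx, wxx, wt the continuous
   extensions to the closed rectangle of dw/dx, d^2w/dx^2, dw/dt. *)
Definition C21 (w wx wxx wt : R -> R -> R) (T : R) : Prop :=
  cont_on_rect w T /\ cont_on_rect wx T /\ cont_on_rect wxx T /\ cont_on_rect wt T /\
  (forall x t, 0 < x < 2 * PI -> 0 < t < T ->
     is_derive (fun y => w y t) x (wx x t)) /\
  (forall x t, 0 < x < 2 * PI -> 0 < t < T ->
     is_derive (fun y => wx y t) x (wxx x t)) /\
  (forall x t, 0 < x < 2 * PI -> 0 < t < T ->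
     is_derive (fun s => w x s) t (wt x t)).

(* The pointwise quantity |w|+|w_x|+|w_xx|+|w_t| whose max is the C^{2,1} norm. *)
Definition C21_pt (w wx wxx wt : R -> R -> R) (x t : R) : R :=
  Rabs (w x t) + Rabs (wx x t) + Rabs (wxx x t) + Rabs (wt x t).

Definition delayed (u : R -> R -> R) (h x t : R) : R :=
  if Rlt_dec (x - h) 0 then u (x - h + 2 * PI) t else u (x - h) t.

Definition fnl (k : R -> R) (u : R -> R -> R) (h t : R) : R :=
  RInt (fun x => k x * u x t * delayed u h x t) 0 (2 * PI).

(* Main.v *)
Require Import Defs.
From Stdlib Require Import Reals.
From Coquelicot Require Import Coquelicot.
From Stdlib Require Import Lra ClassicalEpsilon Classical.
Open Scope R_scope.

Lemma cpt_intro (f : R -> R) x :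
  (forall eps, 0 < eps -> exists d, 0 < d /\ forall y, Rabs (y - x) < d -> Rabs (f y - f x) < eps) ->
  continuity_pt f x.
Proof.
intros H. unfold continuity_pt, continue_in, limit1_in, limit_in. simpl. unfold R_dist.
intros eps Heps. destruct (H eps Heps) as [d [Hd H']]. exists d. split; [lra|].
intros y [_ Hy]. apply H'; exact Hy.
Qed.

Lemma cpt_elim (f : R -> R) x : continuity_pt f x ->
  forall eps, 0 < eps -> exists d, 0 < d /\ forall y, Rabs (y - x) < d -> Rabs (f y - f x) < eps.
Proof.
intros H eps Heps. unfold continuity_pt, continue_in, limit1_in, limit_in in H. simpl in H.
unfold R_dist in H. destruct (H eps Heps) as [d [Hd H']]. exists d. split; [lra|].
intros y Hy. destruct (Req_dec y x) as [->|Hne].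
- rewrite Rminus_eq_0, Rabs_R0; lra.
- apply H'. split; [split; [exact I| congruence] | exact Hy].
Qed.

Definition clamp a b x := Rmax a (Rmin b x).

Lemma clamp_in a b x : a <= b -> a <= clamp a b x <= b.
Proof. intros. unfold clamp, Rmax, Rmin. repeat destruct Rle_dec; lra. Qed.

Lemma clamp_id a b x : a <= x <= b -> clamp a b x = x.
Proof. intros. unfold clamp, Rmax, Rmin. repeat destruct Rle_dec; lra. Qed.

Lemma clamp_lip a b x y : a <= b -> Rabs (clamp a b y - clamp a b x) <= Rabs (y - x).
Proof. intros. unfold clamp, Rmax, Rmin, Rabs. repeat destruct Rle_dec; repeat destruct Rcase_abs; lra. Qed.

Lemma clamp_cont f a b x : a <= b -> cont_on_interval f a b ->
  continuity_pt (fun y => f (clamp a b y)) x.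
Proof.
intros Hab Hf. apply cpt_intro. intros eps Heps.
destruct (Hf (clamp a b x) (clamp_in a b x Hab) eps Heps) as [d [Hd H]].
exists d. split; [exact Hd|]. intros y Hy. apply H.
- apply clamp_in; exact Hab.
- eapply Rle_lt_trans; [apply clamp_lip; exact Hab| exact Hy].
Qed.

Lemma cont_sub f a b a' b' : cont_on_interval f a b -> a <= a' -> b' <= b ->
  cont_on_interval f a' b'.
Proof.
intros H Ha Hb x Hx eps Heps. destruct (H x ltac:(lra) eps Heps) as [d [Hd H']].
exists d. split; [exact Hd|]. intros y Hy Hxy. apply H'; [lra|exact Hxy].
Qed.

Lemma loc_clamp (f : R -> R) a b x : a < x < b ->
  locally x (fun t => f t = f (clamp a b t)).
Proof.
intros Hx. assert (He : 0 < Rmin (x - a) (b - x)) by (apply Rmin_glb_lt; lra).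
exists (mkposreal _ He). intros y Hy.
unfold ball in Hy; simpl in Hy; unfold AbsRing_ball in Hy; simpl in Hy.
unfold abs, minus, plus, opp in Hy; simpl in Hy.
assert (Rabs (y - x) < Rmin (x - a) (b - x)) by exact Hy.
assert (Rmin (x - a) (b - x) <= x - a) by apply Rmin_l.
assert (Rmin (x - a) (b - x) <= b - x) by apply Rmin_r.
rewrite clamp_id; [reflexivity|]. unfold Rabs in *; destruct Rcase_abs; lra.
Qed.

Lemma MVT_rel f df a b : a <= b -> cont_on_interval f a b ->
  (forall x, a < x < b -> is_derive f x (df x)) ->
  exists c, a <= c <= b /\ f b - f a = df c * (b - a).
Proof.
intros Hab Hc Hd.
destruct (MVT_gen (fun y => f (clamp a b y)) a b df) as [c [Hc1 Hc2]].
- intros x Hx. rewrite Rmin_left, Rmax_right in Hx by lra.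
  apply is_derive_ext_loc with f; [apply loc_clamp; lra| apply Hd; lra].
- intros x Hx. apply clamp_cont; assumption.
- rewrite Rmin_left, Rmax_right in Hc1 by lra. exists c. split; [exact Hc1|].
  rewrite !clamp_id in Hc2 by lra. exact Hc2.
Qed.

Lemma L1 f df a b m : a <= b -> cont_on_interval f a b ->
  (forall x, a < x < b -> is_derive f x (df x)) ->
  (forall x, a <= x <= b -> df x <= m) -> f b - f a <= m * (b - a).
Proof.
intros Hab Hc Hd Hm. destruct (MVT_rel f df a b Hab Hc Hd) as [c [Hc1 ->]].
apply Rmult_le_compat_r; [lra| apply Hm; exact Hc1].
Qed.

Lemma L1ge f df a b m : a <= b -> cont_on_interval f a b ->
  (forall x, a < x < b -> is_derive f x (df x)) ->
  (forall x, a <= x <= b -> m <= df x) -> m * (b - a) <= f b - f a.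
Proof.
intros Hab Hc Hd Hm. destruct (MVT_rel f df a b Hab Hc Hd) as [c [Hc1 ->]].
apply Rmult_le_compat_r; [lra| apply Hm; exact Hc1].
Qed.

Lemma Xa f df a b x0 : cont_on_interval f a b -> cont_on_interval df a b ->
  (forall x, a < x < b -> is_derive f x (df x)) -> a <= x0 < b ->
  (forall x, a <= x <= b -> f x0 <= f x) -> 0 <= df x0.
Proof.
intros Hf Hdf Hd Hx0 Hmin. destruct (Rle_lt_dec 0 (df x0)) as [ok|Hneg]; [exact ok|exfalso].
destruct (Hdf x0 ltac:(lra) (- df x0 / 2) ltac:(lra)) as [d [Hd0 Hdd]].
set (y := Rmin (x0 + d/2) b).
assert (Hy1 : x0 < y) by (unfold y; apply Rmin_glb_lt; lra).
assert (Hy2 : y <= b) by apply Rmin_r.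
assert (Hy3 : y <= x0 + d/2) by apply Rmin_l.
assert (H := L1 f df x0 y (df x0 / 2) ltac:(lra) (cont_sub f a b x0 y Hf ltac:(lra) Hy2)
  (fun x Hx => Hd x ltac:(lra))).
assert (H' : f y - f x0 <= df x0 / 2 * (y - x0)).
{ apply H. intros x Hx. assert (Hz := Hdd x ltac:(lra) ltac:(unfold Rabs; destruct Rcase_abs; lra)).
  unfold Rabs in Hz; destruct Rcase_abs in Hz; lra. }
assert (Hm := Hmin y ltac:(lra)).
assert (df x0 / 2 * (y - x0) < 0) by (apply Rmult_neg_pos; lra). lra.
Qed.

Lemma Xb f df a b x0 : cont_on_interval f a b -> cont_on_interval df a b ->
  (forall x, a < x < b -> is_derive f x (df x)) -> a < x0 <= b ->
  (forall x, a <= x <= b -> f x0 <= f x) -> df x0 <= 0.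
Proof.
intros Hf Hdf Hd Hx0 Hmin. destruct (Rle_lt_dec (df x0) 0) as [ok|Hpos]; [exact ok|exfalso].
destruct (Hdf x0 ltac:(lra) (df x0 / 2) ltac:(lra)) as [d [Hd0 Hdd]].
set (y := Rmax (x0 - d/2) a).
assert (Hy1 : y < x0) by (unfold y; apply Rmax_lub_lt; lra).
assert (Hy2 : a <= y) by apply Rmax_r.
assert (Hy3 : x0 - d/2 <= y) by apply Rmax_l.
assert (H := L1ge f df y x0 (df x0 / 2) ltac:(lra) (cont_sub f a b y x0 Hf Hy2 ltac:(lra))
  (fun x Hx => Hd x ltac:(lra))).
assert (H' : df x0 / 2 * (x0 - y) <= f x0 - f y).
{ apply H. intros x Hx. assert (Hz := Hdd x ltac:(lra) ltac:(unfold Rabs; destruct Rcase_abs; lra)).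
  unfold Rabs in Hz; destruct Rcase_abs in Hz; lra. }
assert (Hm := Hmin y ltac:(lra)).
assert (0 < df x0 / 2 * (x0 - y)) by (apply Rmult_lt_0_compat; lra). lra.
Qed.

Lemma Xc f df d2f a b x0 : cont_on_interval f a b -> cont_on_interval df a b ->
  cont_on_interval d2f a b ->
  (forall x, a < x < b -> is_derive f x (df x)) ->
  (forall x, a < x < b -> is_derive df x (d2f x)) -> a <= x0 < b -> df x0 <= 0 ->
  (forall x, a <= x <= b -> f x0 <= f x) -> 0 <= d2f x0.
Proof.
intros Hf Hdf Hd2f Hd Hd2 Hx0 Hdx0 Hmin.
destruct (Rle_lt_dec 0 (d2f x0)) as [ok|Hneg]; [exact ok|exfalso].
destruct (Hd2f x0 ltac:(lra) (- d2f x0 / 2) ltac:(lra)) as [d [Hd0 Hdd]].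
set (y := Rmin (x0 + d/2) b).
assert (Hy1 : x0 < y) by (unfold y; apply Rmin_glb_lt; lra).
assert (Hy2 : y <= b) by apply Rmin_r.
assert (Hy3 : y <= x0 + d/2) by apply Rmin_l.
set (m := d2f x0 / 2).
assert (Hb : forall z, x0 <= z <= y -> df z - df x0 <= m * (z - x0)).
{ intros z Hz. apply (L1 df d2f x0 z m ltac:(lra) (cont_sub df a b x0 z Hdf ltac:(lra) ltac:(lra))
    (fun x Hx => Hd2 x ltac:(lra))).
  intros x Hx. assert (Hq := Hdd x ltac:(lra) ltac:(unfold Rabs; destruct Rcase_abs; lra)).
  unfold m; unfold Rabs in Hq; destruct Rcase_abs in Hq; lra. }
set (mid := (x0 + y) / 2).
assert (H1 : f mid - f x0 <= 0 * (mid - x0)).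
{ apply (L1 f df x0 mid 0 ltac:(unfold mid; lra) (cont_sub f a b x0 mid Hf ltac:(lra) ltac:(unfold mid; lra))
    (fun x Hx => Hd x ltac:(unfold mid in *; lra))).
  intros x Hx. assert (Hq := Hb x ltac:(unfold mid in *; lra)).
  assert (m * (x - x0) <= 0) by (apply Rmult_le_0_r; unfold m; lra). lra. }
assert (H2 : f y - f mid <= (m * (mid - x0)) * (y - mid)).
{ apply (L1 f df mid y _ ltac:(unfold mid; lra) (cont_sub f a b mid y Hf ltac:(unfold mid; lra) Hy2)
    (fun x Hx => Hd x ltac:(unfold mid in *; lra))).
  intros x Hx. assert (Hq := Hb x ltac:(unfold mid in *; lra)).
  assert (m * (x - x0) <= m * (mid - x0)).
  { apply Rmult_le_compat_neg_l; unfold m, mid in *; lra. } lra. }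
assert (Hneg2 : m * (mid - x0) * (y - mid) < 0).
{ apply Rmult_neg_pos; [apply Rmult_neg_pos|]; unfold m, mid; lra. }
assert (Hm := Hmin y ltac:(lra)). lra.
Qed.

Definition crect (W : R -> R -> R) a b c d : Prop :=
  forall x t, a <= x <= b -> c <= t <= d ->
  forall eps, 0 < eps -> exists delta, 0 < delta /\
    forall y s, a <= y <= b -> c <= s <= d ->
      Rabs (y - x) < delta -> Rabs (s - t) < delta ->
      Rabs (W y s - W x t) < eps.

Lemma crect_sub W a b c d c' d' : crect W a b c d -> c <= c' -> d' <= d -> crect W a b c' d'.
Proof.
intros H H1 H2 x t Hx Ht eps Heps. destruct (H x t Hx ltac:(lra) eps Heps) as [dl [Hd H']].
exists dl. split; [exact Hd|]. intros y s Hy Hs. apply H'; [exact Hy| lra].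
Qed.

Lemma crect_mult A B a b c d : crect A a b c d -> crect B a b c d ->
  crect (fun x t => A x t * B x t) a b c d.
Proof.
intros HA HB x t Hx Ht eps Heps.
set (a0 := Rabs (A x t)). set (b0 := Rabs (B x t)).
assert (Ha0 : 0 <= a0) by apply Rabs_pos. assert (Hb0 : 0 <= b0) by apply Rabs_pos.
assert (Ea0 : Rabs (A x t) = a0) by reflexivity. assert (Eb0 : Rabs (B x t) = b0) by reflexivity.
clearbody a0 b0.
set (e1 := eps / (2 * (b0 + 1))). set (e2 := Rmin 1 (eps / (2 * (a0 + 1)))).
assert (He1 : 0 < e1) by (unfold e1; apply Rdiv_lt_0_compat; lra).
assert (He2 : 0 < e2) by (unfold e2; apply Rmin_glb_lt; [lra| apply Rdiv_lt_0_compat; lra]).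
assert (E1 : e1 * (b0 + 1) = eps / 2) by (unfold e1; field; lra).
assert (E2 : a0 * e2 < eps / 2).
{ assert (e2 <= eps / (2 * (a0 + 1))) by apply Rmin_r.
  assert (a0 * e2 <= a0 * (eps / (2 * (a0 + 1)))) by (apply Rmult_le_compat_l; lra).
  assert (a0 * (eps / (2 * (a0 + 1))) < eps / 2).
  { apply Rmult_lt_reg_r with (2 * (a0 + 1)); [lra|].
    replace (a0 * (eps / (2 * (a0 + 1))) * (2 * (a0 + 1))) with (a0 * eps) by (field; lra). nra. }
  lra. }
assert (E3 : e2 <= 1) by apply Rmin_l.
clearbody e1 e2.
destruct (HA x t Hx Ht e1 He1) as [d1 [Hd1 H1]].
destruct (HB x t Hx Ht e2 He2) as [d2 [Hd2 H2]].
exists (Rmin d1 d2). split; [apply Rmin_glb_lt; lra|].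
intros y s Hy Hs Hyx Hst.
assert (Hm1 := Rmin_l d1 d2). assert (Hm2 := Rmin_r d1 d2).
assert (HA' := H1 y s Hy Hs ltac:(lra) ltac:(lra)).
assert (HB' := H2 y s Hy Hs ltac:(lra) ltac:(lra)).
assert (Hq : A y s * B y s - A x t * B x t = (A y s - A x t) * B y s + A x t * (B y s - B x t)) by ring.
rewrite Hq.
assert (Hbnd : Rabs (B y s) <= b0 + 1).
{ assert (Htri := Rabs_triang_inv (B y s) (B x t)). lra. }
assert (T1 : Rabs ((A y s - A x t) * B y s) <= e1 * (b0 + 1)).
{ rewrite Rabs_mult. apply Rmult_le_compat; try apply Rabs_pos; lra. }
assert (T2 : Rabs (A x t * (B y s - B x t)) <= a0 * e2).
{ rewrite Rabs_mult. apply Rmult_le_compat; try apply Rabs_pos; lra. }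
eapply Rle_lt_trans; [apply Rabs_triang|]. lra.
Qed.

Lemma crect_tfun (g : R -> R) a b c d : (forall t, continuity_pt g t) ->
  crect (fun x t => g t) a b c d.
Proof.
intros Hg x t Hx Ht eps Heps. destruct (cpt_elim g t (Hg t) eps Heps) as [dl [Hd H]].
exists dl. split; [exact Hd|]. intros y s _ _ _ Hs. apply H; exact Hs.
Qed.

Lemma UC W a b c d t0 : a <= b -> crect W a b c d -> c <= t0 <= d ->
  forall eps, 0 < eps -> exists delta, 0 < delta /\
   forall x t, a <= x <= b -> c <= t <= d -> Rabs (t - t0) < delta -> Rabs (W x t - W x t0) < eps.
Proof.
intros Hab HW Ht0 eps Heps.
assert (Hex : forall x, exists dl : posreal, a <= x <= b -> forall y s, a <= y <= b -> c <= s <= d ->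
   Rabs (y - x) < dl -> Rabs (s - t0) < dl -> Rabs (W y s - W x t0) < eps / 2).
{ intros x. destruct (Rle_dec a x) as [H1|H1]; [destruct (Rle_dec x b) as [H2|H2]|].
  - destruct (HW x t0 ltac:(lra) Ht0 (eps/2) ltac:(lra)) as [dl [Hd H]].
    exists (mkposreal dl Hd). intros _. exact H.
  - exists (mkposreal 1 Rlt_0_1). intros; lra.
  - exists (mkposreal 1 Rlt_0_1). intros; lra. }
set (dl := fun x => proj1_sig (constructive_indefinite_description _ (Hex x))).
assert (Hdl : forall x, a <= x <= b -> forall y s, a <= y <= b -> c <= s <= d ->
   Rabs (y - x) < dl x -> Rabs (s - t0) < dl x -> Rabs (W y s - W x t0) < eps / 2).
{ intros x. unfold dl. destruct (constructive_indefinite_description _ (Hex x)) as [q Hq]. exact Hq. }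
destruct (compactness_value_1d a b dl) as [dd Hdd].
exists dd. split; [apply cond_pos|]. intros x t Hx Ht Htt.
destruct (Rlt_dec (Rabs (W x t - W x t0)) eps) as [ok|nok]; [exact ok|exfalso].
apply (Hdd x Hx). intros [x' [Hx' [Hxx' Hle]]]. apply nok.
assert (R1 : Rabs (W x t - W x' t0) < eps / 2) by (apply Hdl; auto; lra).
assert (R2 : Rabs (W x t0 - W x' t0) < eps / 2).
{ apply Hdl; auto. rewrite Rminus_eq_0, Rabs_R0. apply cond_pos. }
assert (Hq : W x t - W x t0 = (W x t - W x' t0) - (W x t0 - W x' t0)) by ring.
rewrite Hq. eapply Rle_lt_trans; [apply Rabs_triang|]. rewrite Rabs_Ropp. lra.
Qed.

Lemma EVT2 W a b c d : a <= b -> c <= d -> crect W a b c d ->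
  exists x0 t0, a <= x0 <= b /\ c <= t0 <= d /\
    forall x t, a <= x <= b -> c <= t <= d -> W x0 t0 <= W x t.
Proof.
intros Hab Hcd HW.
assert (Hex : forall t, exists mx, (forall x, a <= x <= b -> W mx (clamp c d t) <= W x (clamp c d t)) /\ a <= mx <= b).
{ intros t. assert (Hct := clamp_in c d t Hcd).
  assert (Hci : cont_on_interval (fun x => W x (clamp c d t)) a b).
  { intros x Hx eps Heps. destruct (HW x (clamp c d t) Hx Hct eps Heps) as [dl [Hd H]].
    exists dl. split; [exact Hd|]. intros y Hy Hyx. apply H; auto. rewrite Rminus_eq_0, Rabs_R0; lra. }
  destruct (continuity_ab_min (fun x => W (clamp a b x) (clamp c d t)) a b Hab
     (fun x _ => clamp_cont (fun x => W x (clamp c d t)) a b x Hab Hci)) as [mx [H1 H2]].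
  exists mx. split; [|exact H2]. intros x Hx. specialize (H1 x Hx). simpl in H1.
  rewrite (clamp_id a b x), (clamp_id a b mx) in H1 by lra. exact H1. }
set (xm := fun t => proj1_sig (constructive_indefinite_description _ (Hex t))).
assert (Hxm : forall t, (forall x, a <= x <= b -> W (xm t) (clamp c d t) <= W x (clamp c d t)) /\ a <= xm t <= b).
{ intros t. unfold xm. destruct (constructive_indefinite_description _ (Hex t)) as [q Hq]. exact Hq. }
set (G := fun t => W (xm t) (clamp c d t)).
assert (HG : forall t, continuity_pt G t).
{ intros t0. apply cpt_intro. intros eps Heps.
  assert (Hct0 := clamp_in c d t0 Hcd).
  destruct (UC W a b c d (clamp c d t0) Hab HW Hct0 eps Heps) as [dl [Hd H]].
  exists dl. split; [exact Hd|]. intros t Ht.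
  assert (Hct := clamp_in c d t Hcd).
  assert (Hl := clamp_lip c d t0 t Hcd).
  destruct (Hxm t) as [Hm1 Hm2]. destruct (Hxm t0) as [Hm3 Hm4].
  assert (A1 := H (xm t0) (clamp c d t) Hm4 Hct ltac:(lra)).
  assert (A2 := H (xm t) (clamp c d t) Hm2 Hct ltac:(lra)).
  assert (B1 := Hm1 (xm t0) Hm4). assert (B2 := Hm3 (xm t) Hm2).
  unfold G. unfold Rabs in *. repeat destruct Rcase_abs; lra. }
destruct (continuity_ab_min G c d Hcd (fun t _ => HG t)) as [t0 [Ht1 Ht2]].
exists (xm t0), t0. destruct (Hxm t0) as [Hm1 Hm2].
split; [exact Hm2|]. split; [exact Ht2|]. intros x t Hx Ht.
assert (Hg := Ht1 t Ht). unfold G in Hg. rewrite !clamp_id in Hg by lra.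
destruct (Hxm t) as [Hm3 Hm4]. assert (Hq := Hm3 x Hx). rewrite clamp_id in Hq by lra. lra.
Qed.

Lemma deriv_w (U Ut : R -> R) lam t : is_derive U t (Ut t) ->
  is_derive (fun t => exp(-lam*t) * U t) t (exp(-lam*t)*(Ut t - lam * U t)).
Proof.
intros H.
assert (Hexp : is_derive (fun t => exp(-lam*t)) t (-lam * exp(-lam*t))) by (auto_derive; auto; ring).
pose proof (is_derive_mult _ _ _ _ _ Hexp H (fun n m => Rmult_comm n m)) as H2.
unfold plus, mult in H2; simpl in H2.
replace (exp (- lam * t) * (Ut t - lam * U t)) with (-lam * exp(-lam*t) * U t + exp (- lam * t) * Ut t) by ring.
exact H2.
Qed.

Lemma Rabs_lt_split a b : Rabs a < b -> - b < a < b.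
Proof. unfold Rabs; destruct Rcase_abs; lra. Qed.

Lemma Td U Ut lam T tau x1 t0 : 0 < lam ->
  crect U 0 (2*PI) 0 T -> crect Ut 0 (2*PI) 0 T ->
  crect (fun x t => exp(-lam*t) * U x t) 0 (2*PI) 0 T ->
  (forall x t, 0 < x < 2*PI -> 0 < t < T -> is_derive (fun s => U x s) t (Ut x t)) ->
  0 <= x1 < 2*PI -> 0 < t0 <= tau -> tau < T ->
  (forall t, 0 <= t <= tau -> exp(-lam*t0) * U x1 t0 <= exp(-lam*t) * U x1 t) ->
  Ut x1 t0 - lam * U x1 t0 <= 0.
Proof.
intros Hlam HU HUt Hw Hd Hx1 Ht0 Htau Hmin.
destruct (Rle_lt_dec (Ut x1 t0 - lam * U x1 t0) 0) as [ok|Hg]; [exact ok|exfalso].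
set (eta := (Ut x1 t0 - lam * U x1 t0) / 2).
assert (Heta : 0 < eta) by (unfold eta; lra).
destruct (HUt x1 t0 ltac:(lra) ltac:(lra) (eta/2) ltac:(lra)) as [d1 [Hd1 H1]].
destruct (HU x1 t0 ltac:(lra) ltac:(lra) (eta/(2*lam)) ltac:(apply Rdiv_lt_0_compat; lra)) as [d2 [Hd2 H2]].
set (dl := Rmin d1 d2).
assert (Hdl : 0 < dl) by (apply Rmin_glb_lt; lra).
assert (Hdl1 : dl <= d1) by apply Rmin_l. assert (Hdl2 : dl <= d2) by apply Rmin_r.
assert (Hg2 : forall x t, 0 <= x <= 2*PI -> 0 <= t <= T -> Rabs (x - x1) < dl -> Rabs (t - t0) < dl ->
   eta < Ut x t - lam * U x t).
{ intros x t Hx Ht Hxx Htt.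
  assert (A1 := Rabs_lt_split _ _ (H1 x t Hx Ht ltac:(lra) ltac:(lra))).
  assert (A2 := Rabs_lt_split _ _ (H2 x t Hx Ht ltac:(lra) ltac:(lra))).
  assert (E : lam * (eta / (2 * lam)) = eta / 2) by (field; lra).
  assert (lam * (U x t - U x1 t0) < eta / 2) by (rewrite <- E; apply Rmult_lt_compat_l; lra).
  assert (- (eta / 2) < lam * (U x t - U x1 t0)).
  { rewrite <- E. replace (- (lam * (eta / (2 * lam)))) with (lam * (- (eta / (2 * lam)))) by ring.
    apply Rmult_lt_compat_l; lra. }
  unfold eta in *. lra. }
set (s := Rmin (dl/2) (t0/2)).
assert (Hs1 : s <= dl/2) by apply Rmin_l. assert (Hs2 : s <= t0/2) by apply Rmin_r.
assert (Hs0 : 0 < s) by (apply Rmin_glb_lt; lra).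
set (E := exp(-lam*t0) * eta * s).
assert (HE : 0 < E) by (unfold E; apply Rmult_lt_0_compat; [apply Rmult_lt_0_compat; [apply exp_pos|lra]|lra]).
set (w := fun x t => exp(-lam*t) * U x t).
assert (Key : forall x, 0 < x < 2*PI -> Rabs (x - x1) < dl -> E <= w x t0 - w x (t0 - s)).
{ intros x Hx Hxx.
  assert (Hder : forall t, t0 - s <= t <= t0 -> is_derive (fun t => exp(-lam*t) * U x t) t
             (exp(-lam*t)*(Ut x t - lam * U x t))).
  { intros t Ht. apply (deriv_w (fun s => U x s) (fun s => Ut x s)). apply Hd; lra. }
  destruct (MVT_gen (fun t => exp(-lam*t) * U x t) (t0 - s) t0 (fun t => exp(-lam*t)*(Ut x t - lam * U x t)))
    as [c [Hc Hc2]].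
  - intros t Ht. rewrite Rmin_left, Rmax_right in Ht by lra. apply Hder; lra.
  - intros t Ht. rewrite Rmin_left, Rmax_right in Ht by lra. apply continuity_pt_filterlim.
    apply (ex_derive_continuous (fun t => exp(-lam*t) * U x t)). eexists. apply Hder; lra.
  - rewrite Rmin_left, Rmax_right in Hc by lra. unfold w. rewrite Hc2.
    assert (Hgc := Hg2 x c ltac:(lra) ltac:(lra) Hxx ltac:(unfold Rabs; destruct Rcase_abs; lra)).
    assert (Hex : exp(-lam*t0) <= exp(-lam*c)).
    { destruct (Req_dec c t0) as [->|Hne]; [lra|]. left. apply exp_increasing. nra. }
    assert (Hp := exp_pos (-lam*t0)).
    replace (t0 - (t0 - s)) with s by ring. unfold E.
    apply Rmult_le_compat_r; [lra|]. apply Rmult_le_compat; lra. }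
destruct (Hw x1 t0 ltac:(lra) ltac:(lra) (E/4) ltac:(lra)) as [d3 [Hd3 H3]].
destruct (Hw x1 (t0 - s) ltac:(lra) ltac:(lra) (E/4) ltac:(lra)) as [d4 [Hd4 H4]].
set (r := Rmin (Rmin dl (Rmin d3 d4)) (2*PI - x1) / 2).
assert (Hr0 : 0 < r).
{ unfold r. assert (0 < Rmin (Rmin dl (Rmin d3 d4)) (2*PI - x1)); [|lra].
  repeat apply Rmin_glb_lt; lra. }
assert (Hr1 : 2 * r <= dl /\ 2 * r <= d3 /\ 2 * r <= d4 /\ 2 * r <= 2*PI - x1).
{ unfold r. assert (Q1 := Rmin_l (Rmin dl (Rmin d3 d4)) (2*PI - x1)).
  assert (Q2 := Rmin_r (Rmin dl (Rmin d3 d4)) (2*PI - x1)).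
  assert (Q3 := Rmin_l dl (Rmin d3 d4)). assert (Q4 := Rmin_r dl (Rmin d3 d4)).
  assert (Q5 := Rmin_l d3 d4). assert (Q6 := Rmin_r d3 d4). lra. }
set (x' := x1 + r).
assert (Hxr : Rabs (x' - x1) = r) by (unfold x'; replace (x1 + r - x1) with r by ring; apply Rabs_pos_eq; lra).
assert (K := Key x' ltac:(unfold x'; lra) ltac:(lra)).
assert (K3 := Rabs_lt_split _ _ (H3 x' t0 ltac:(unfold x'; lra) ltac:(lra) ltac:(lra)
   ltac:(rewrite Rminus_eq_0, Rabs_R0; lra))).
assert (K4 := Rabs_lt_split _ _ (H4 x' (t0 - s) ltac:(unfold x'; lra) ltac:(lra) ltac:(lra)
   ltac:(rewrite Rminus_eq_0, Rabs_R0; lra))).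
assert (M := Hmin (t0 - s) ltac:(lra)).
unfold w in K. lra.
Qed.

Lemma rect_slice W T t : cont_on_rect W T -> 0 <= t <= T -> cont_on_interval (fun x => W x t) 0 (2*PI).
Proof.
intros H Ht x Hx eps Heps. destruct (H x t Hx Ht eps Heps) as [d [Hd H']].
exists d. split; [exact Hd|]. intros y Hy Hyx. apply H'; auto. rewrite Rminus_eq_0, Rabs_R0; lra.
Qed.

Lemma maxp (T alpha C : R) (U Ux Uxx Ut c : R -> R -> R) :
  0 < T -> 0 < alpha -> C21 U Ux Uxx Ut T ->
  (forall x t, 0<=x<=2*PI -> 0<=t<=T -> Ut x t = U x t * c x t + alpha * Uxx x t) ->
  (forall x t, 0<=x<=2*PI -> 0<=t<=T -> Rabs (c x t) <= C) ->
  (forall x, 0<=x<=2*PI -> 0 <= U x 0) ->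
  (forall t, 0<=t<=T -> U 0 t = U (2*PI) t) ->
  (forall t, 0<=t<=T -> Ux 0 t = Ux (2*PI) t) ->
  forall x t, 0<=x<=2*PI -> 0<=t<=T -> 0 <= U x t.
Proof.
intros HT Halpha [HU [HUx [HUxx [HUt [Hdx [Hdxx Hdt]]]]]] Heq Hc Hinit Hp0 Hp1.
assert (HPI := PI_RGT_0).
set (lam := Rabs C + 1).
assert (Hlam : 0 < lam) by (unfold lam; assert (Q := Rabs_pos C); lra).
assert (HU' : crect U 0 (2*PI) 0 T) by exact HU.
assert (HUt' : crect Ut 0 (2*PI) 0 T) by exact HUt.
assert (Hw : crect (fun x t => exp(-lam*t) * U x t) 0 (2*PI) 0 T).
{ apply (crect_mult (fun x t => exp(-lam*t)) U); [|exact HU'].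
  apply crect_tfun. intros t. apply continuity_pt_filterlim.
  apply (ex_derive_continuous (fun t => exp(-lam*t))). auto_derive. auto. }
assert (ClA : forall tau, 0 <= tau < T -> forall x t, 0<=x<=2*PI -> 0<=t<=tau -> 0 <= U x t).
{ intros tau Htau.
  destruct (EVT2 (fun x t => exp(-lam*t) * U x t) 0 (2*PI) 0 tau ltac:(lra) ltac:(lra)
     (crect_sub _ 0 (2*PI) 0 T 0 tau Hw ltac:(lra) ltac:(lra))) as [x0 [t0 [Hx0 [Ht0 Hmin]]]].
  cut (0 <= exp(-lam*t0) * U x0 t0).
  { intros H0 x t Hx Ht. assert (Q := Hmin x t Hx Ht). simpl in Q.
    assert (Q2 := exp_pos (-lam*t)).
    destruct (Rle_lt_dec 0 (U x t)) as [ok|bad]; [exact ok|]. nra. }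
  destruct (Rle_lt_dec 0 (exp(-lam*t0) * U x0 t0)) as [ok|Hneg]; [exact ok|exfalso].
  assert (He0 := exp_pos (-lam*t0)).
  assert (HU0 : U x0 t0 < 0) by nra.
  destruct (Req_dec t0 0) as [Ht00|Ht00].
  { subst t0. assert (Q := Hinit x0 Hx0). lra. }
  assert (Hxmin : forall x, 0 <= x <= 2*PI -> U x0 t0 <= U x t0).
  { intros x Hx. assert (Q := Hmin x t0 Hx Ht0). simpl in Q.
    apply Rmult_le_reg_l with (exp(-lam*t0)); lra. }
  set (x1 := if Req_EM_T x0 (2*PI) then 0 else x0).
  assert (Hx1 : 0 <= x1 < 2*PI /\ U x1 t0 = U x0 t0 /\ (x1 = 0 \/ x1 = x0)).
  { unfold x1. destruct (Req_EM_T x0 (2*PI)) as [E|E].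
    - rewrite E. rewrite Hp0 by lra. split; [lra|]. split; [reflexivity| left; reflexivity].
    - split; [lra|]. split; [reflexivity| right; reflexivity]. }
  destruct Hx1 as [Hx1 [HU1 Hx1c]].
  assert (Hxmin1 : forall x, 0 <= x <= 2*PI -> U x1 t0 <= U x t0) by (intros; rewrite HU1; auto).
  assert (Htmin1 : forall t, 0 <= t <= tau -> exp(-lam*t0) * U x1 t0 <= exp(-lam*t) * U x1 t).
  { intros t Ht. rewrite HU1. assert (Q := Hmin x1 t ltac:(lra) Ht). exact Q. }
  assert (Ht0T : 0 <= t0 <= T) by lra.
  assert (C0 := rect_slice U T t0 HU Ht0T).
  assert (C1 := rect_slice Ux T t0 HUx Ht0T).
  assert (C2 := rect_slice Uxx T t0 HUxx Ht0T).
  assert (D1 : forall x, 0 < x < 2*PI -> is_derive (fun y => U y t0) x (Ux x t0)) by (intros; apply Hdx; lra).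
  assert (D2 : forall x, 0 < x < 2*PI -> is_derive (fun y => Ux y t0) x (Uxx x t0)) by (intros; apply Hdxx; lra).
  assert (Ha := Xa (fun y => U y t0) (fun y => Ux y t0) 0 (2*PI) x1 C0 C1 D1 Hx1 Hxmin1). simpl in Ha.
  assert (Hb : Ux x1 t0 <= 0).
  { destruct (Req_dec x1 0) as [E|E].
    - rewrite E, Hp1 by lra.
      apply (Xb (fun y => U y t0) (fun y => Ux y t0) 0 (2*PI) (2*PI) C0 C1 D1 ltac:(lra)).
      intros x Hx. simpl. rewrite <- Hp0 by lra. rewrite <- E. auto.
    - apply (Xb (fun y => U y t0) (fun y => Ux y t0) 0 (2*PI) x1 C0 C1 D1 ltac:(lra) Hxmin1). }
  assert (Hc2 := Xc (fun y => U y t0) (fun y => Ux y t0) (fun y => Uxx y t0) 0 (2*PI) x1 C0 C1 C2 D1 D2 Hx1 Hb Hxmin1).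
  simpl in Hc2.
  assert (Htd := Td U Ut lam T tau x1 t0 Hlam HU' HUt' Hw
     (fun x t Hx Ht => Hdt x t Hx Ht) Hx1 ltac:(lra) ltac:(lra) Htmin1).
  assert (HE := Heq x1 t0 ltac:(lra) Ht0T).
  assert (Hcb := Hc x1 t0 ltac:(lra) Ht0T).
  assert (Hcl : c x1 t0 < lam).
  { unfold lam. assert (Q := Rle_abs (c x1 t0)). assert (Q2 := Rle_abs C). lra. }
  assert (HU1n : U x1 t0 < 0) by lra.
  assert (P1 : 0 <= alpha * Uxx x1 t0) by (apply Rmult_le_pos; lra).
  assert (P2 : 0 < U x1 t0 * c x1 t0 - lam * U x1 t0).
  { replace (U x1 t0 * c x1 t0 - lam * U x1 t0) with ((- U x1 t0) * (lam - c x1 t0)) by ring.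
    apply Rmult_lt_0_compat; lra. }
  lra. }
intros x t Hx Ht.
destruct (Rlt_le_dec t T) as [HtT|HtT].
- apply (ClA t ltac:(lra) x t Hx ltac:(lra)).
- assert (t = T) by lra. subst t.
  destruct (Rle_lt_dec 0 (U x T)) as [ok|bad]; [exact ok|exfalso].
  destruct (HU x T Hx ltac:(lra) (- U x T) ltac:(lra)) as [d [Hd H]].
  set (s := Rmin (d/2) (T/2)).
  assert (Q1 := Rmin_l (d/2) (T/2)). assert (Q2 := Rmin_r (d/2) (T/2)).
  assert (Hs : 0 < s) by (apply Rmin_glb_lt; lra).
  assert (K := H x (T - s) Hx ltac:(unfold s in *; lra) ltac:(rewrite Rminus_eq_0, Rabs_R0; lra)
     ltac:(replace (T - s - T) with (- s) by ring; rewrite Rabs_Ropp, Rabs_pos_eq; unfold s in *; lra)).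
  assert (K2 := ClA (T - s) ltac:(unfold s in *; lra) x (T - s) Hx ltac:(unfold s in *; lra)).
  apply Rabs_lt_split in K. lra.
Qed.

Lemma cpt_shift (F : R -> R) a x : continuity_pt F (x + a) -> continuity_pt (fun y => F (y + a)) x.
Proof.
intros H. apply cpt_intro. intros eps Heps. destruct (cpt_elim F (x + a) H eps Heps) as [d [Hd H']].
exists d. split; [exact Hd|]. intros y Hy. apply H'. replace (y + a - (x + a)) with (y - x) by ring. exact Hy.
Qed.

Lemma cont_of_cpt (f : R -> R) z : continuity_pt f z -> continuous f z.
Proof. intros H. exact (proj1 (continuity_pt_filterlim f z) H). Qed.

Lemma fnl_bound (k : R -> R) (U : R -> R -> R) h T t Kmax M :
  0 < h < 2*PI -> cont_on_interval k 0 (2*PI) -> cont_on_rect U T -> 0 <= t <= T ->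
  (forall x, 0 <= x <= 2*PI -> Rabs (k x) <= Kmax) ->
  (forall x, 0 <= x <= 2*PI -> Rabs (U x t) <= M) ->
  Rabs (fnl k U h t) <= 2*PI * (Kmax * M * M).
Proof.
intros Hh Hk HU Ht HK HM.
assert (HPI := PI_RGT_0).
assert (CU := rect_slice U T t HU Ht).
set (K := fun x => k (clamp 0 (2*PI) x)).
set (V := fun x => U (clamp 0 (2*PI) x) t).
assert (CK : forall x, continuity_pt K x) by (intros; apply clamp_cont; [lra|exact Hk]).
assert (CV : forall x, continuity_pt V x) by (intros; apply (clamp_cont (fun y => U y t)); [lra|exact CU]).
set (g := fun x => k x * U x t * delayed U h x t).
assert (I1 : ex_RInt g 0 h).
{ apply (ex_RInt_ext (fun x => K x * V x * V (x + (- h + 2*PI)))).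
  - intros x Hx. rewrite Rmin_left, Rmax_right in Hx by lra.
    unfold g, K, V, delayed. destruct (Rlt_dec (x - h) 0) as [_|E]; [|lra].
    rewrite !clamp_id by lra; first [reflexivity | f_equal; f_equal; ring].
  - apply (ex_RInt_continuous (V:=R_CompleteNormedModule)). intros z _. apply cont_of_cpt.
    apply continuity_pt_mult; [apply continuity_pt_mult; auto|].
    apply (cpt_shift V). auto. }
assert (I2 : ex_RInt g h (2*PI)).
{ apply (ex_RInt_ext (fun x => K x * V x * V (x + (- h)))).
  - intros x Hx. rewrite Rmin_left, Rmax_right in Hx by lra.
    unfold g, K, V, delayed. destruct (Rlt_dec (x - h) 0) as [E|_]; [lra|].
    rewrite !clamp_id by lra; first [reflexivity | f_equal; f_equal; ring].
  - apply (ex_RInt_continuous (V:=R_CompleteNormedModule)). intros z _. apply cont_of_cpt.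
    apply continuity_pt_mult; [apply continuity_pt_mult; auto|].
    apply (cpt_shift V). auto. }
assert (I := ex_RInt_Chasles g 0 h (2*PI) I1 I2).
unfold fnl. fold g.
replace (2*PI) with (2*PI - 0) at 2 by ring.
apply abs_RInt_le_const; [lra|exact I|].
intros x Hx. unfold g. rewrite !Rabs_mult.
assert (Hd : Rabs (delayed U h x t) <= M).
{ unfold delayed. destruct (Rlt_dec (x - h) 0); apply HM; lra. }
assert (A1 := HK x Hx). assert (A2 := HM x Hx).
assert (Q : Rabs (k x) * Rabs (U x t) <= Kmax * M).
{ apply Rmult_le_compat; try apply Rabs_pos; assumption. }
apply Rmult_le_compat; try assumption.
apply Rmult_le_pos; apply Rabs_pos. apply Rabs_pos.
Qed.

Theorem theorem4
  (h0 alpha T : R) (k k1 k2 phi phi1 phi2 : R -> R)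
  (u ux uxx ut : R -> R -> R -> R) :
  0 < h0 < 2 * PI -> 0 < alpha -> 0 < T ->
  C2_on k k1 k2 0 (2 * PI) ->
  (forall x, 0 <= x <= 2 * PI -> 0 < k x) ->
  k 0 = k (2 * PI) -> k1 0 = k1 (2 * PI) ->
  C2_on phi phi1 phi2 (- h0) (2 * PI) ->
  (forall x, - h0 <= x <= 2 * PI -> 0 <= phi x) ->
  RInt phi 0 (2 * PI) = 1 ->
  (forall x, - h0 <= x <= 0 -> phi x = phi (x + 2 * PI)) ->
  (forall h, 0 < h <= h0 ->
     C21 (u h) (ux h) (uxx h) (ut h) T /\
     (forall x t, 0 <= x <= 2 * PI -> 0 <= t <= T ->
        ut h x t = u h x t * (k x * delayed (u h) h x t - fnl k (u h) h t)
                   + alpha * uxx h x t) /\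
     (forall x, 0 <= x <= 2 * PI -> u h x 0 = phi x) /\
     (forall t, 0 <= t <= T -> u h 0 t = u h (2 * PI) t) /\
     (forall t, 0 <= t <= T -> ux h 0 t = ux h (2 * PI) t)) ->
  (exists M, forall h, 0 < h <= h0 -> forall x t, 0 <= x <= 2 * PI -> 0 <= t <= T ->
     C21_pt (u h) (ux h) (uxx h) (ut h) x t <= M) ->
  exists hs, 0 < hs <= h0 /\
    forall h, 0 < h <= hs -> forall x t, 0 <= x <= 2 * PI -> 0 <= t <= T ->
      0 <= u h x t.
Proof.
intros Hh0 Halpha HT [Hk _] Hkpos _ _ _ Hphi _ _ Hsol [M HM].
assert (HPI := PI_RGT_0).
destruct (continuity_ab_maj (fun x => k (clamp 0 (2*PI) x)) 0 (2*PI) ltac:(lra)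
   (fun x _ => clamp_cont k 0 (2*PI) x ltac:(lra) Hk)) as [Mx [HMx1 HMx2]].
set (Kmax := k (clamp 0 (2*PI) Mx)).
assert (HK : forall x, 0 <= x <= 2*PI -> Rabs (k x) <= Kmax).
{ intros x Hx. assert (Q := HMx1 x Hx). simpl in Q. rewrite (clamp_id 0 (2*PI) x) in Q by lra.
  assert (Q2 := Hkpos x Hx). rewrite Rabs_pos_eq by lra. exact Q. }
exists h0. split; [lra|]. intros h Hh.
destruct (Hsol h Hh) as [HC [Heq [Hinit [Hp0 Hp1]]]].
assert (HUb : forall x t, 0 <= x <= 2*PI -> 0 <= t <= T -> Rabs (u h x t) <= M).
{ intros x t Hx Ht. assert (Q := HM h Hh x t Hx Ht). unfold C21_pt in Q.
  assert (Q1 := Rabs_pos (ux h x t)). assert (Q2 := Rabs_pos (uxx h x t)).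
  assert (Q3 := Rabs_pos (ut h x t)). lra. }
apply (maxp T alpha (Kmax * M + 2*PI*(Kmax*M*M)) (u h) (ux h) (uxx h) (ut h)
   (fun x t => k x * delayed (u h) h x t - fnl k (u h) h t)); auto.
- intros x t Hx Ht. simpl.
  assert (Hf := fnl_bound k (u h) h T t Kmax M ltac:(lra) Hk (proj1 HC) Ht HK
     (fun x Hx => HUb x t Hx Ht)).
  assert (Hd : Rabs (delayed (u h) h x t) <= M).
  { unfold delayed. destruct (Rlt_dec (x - h) 0); apply HUb; lra. }
  eapply Rle_trans; [apply Rabs_triang|]. rewrite Rabs_Ropp, Rabs_mult.
  assert (Rabs (k x) * Rabs (delayed (u h) h x t) <= Kmax * M).
  { apply Rmult_le_compat; try apply Rabs_pos; auto. }
  lra.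
- intros x Hx. rewrite Hinit by exact Hx. apply Hphi. lra.
Qed.
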